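(* Let $a,b,c$ be indeterminates, and let $\{U_n(x)\}_{n\ge 0}$ be the Chebyshev polynomials of the second kind, defined by $\sum_{n=0}^{\infty} U_n(x)t^n = \frac{1}{1-2xt+t^2}$. Then, as formal power series in $t$, $$\sum_{n=0}^{\infty} U_n(a)U_n(b)U_n(c)\, t^n = \frac{N(t)}{D(t)},$$ where $$N(t)=1+(-4a^2-4b^2-4c^2+3)t^2+16abc\,t^3+(-4a^2-4b^2-4c^2+3)t^4+t^6,$$ and $$\begin{aligned}D(t)={}&t^8-8abc\,t^7+(16a^2b^2+16a^2c^2-8a^2+16b^2c^2-8b^2-8c^2+4)t^6\\ &+(-32a^3bc+40abc-32ab^3c-32abc^3)t^5\\ &+(16a^4+64a^2b^2c^2-16a^2+16b^4-16b^2+6+16c^4-16c^2)t^4\\ &+(-32a^3bc+40abc-32ab^3c-32abc^3)t^3\\ &+(16a^2b^2+16a^2c^2-8a^2+16b^2c^2-8b^2-8c^2+4)t^2-8abc\,t+1.\end{aligned}$$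
   Context: The identity is between formal power series in $t$ whose coefficients are polynomials in $a,b,c$; $U_n(x)$ is the polynomial in $x$ given as the coefficient of $t^n$ in $1/(1-2xt+t^2)$. *)

(* Defs.v *)
From HB Require Import structures.
From mathcomp Require Import all_boot all_order all_algebra.
From mathcomp Require Import ring zify.
From mathcomp Require mpoly.
Set Implicit Arguments. Unset Strict Implicit. Unset Printing Implicit Defensive.
Import Order.TTheory GRing.Theory Num.Theory.
Local Open Scope ring_scope.

(* Formal power series in t with coefficients in a commutative ring R are
   represented by their coefficient sequences  s : nat -> R ; polynomials in t
   are elements of {poly R}.  For polynomials N, D in t (D with constant term a
   unit, so D is invertible as a power series), the identity of formal power
   series  sum_n s n t^n = N / D  means  (sum_n s n t^n) * D = N, i.e.
   the Cauchy product of s with the coefficients of D equals the coefficients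
   of N in every degree. *)
Definition series_is_quotient (R : comNzRingType) (s : nat -> R) (N D : {poly R}) : Prop :=
  forall n : nat, \sum_(i < n.+1) s i * D`_(n - i) = N`_n.

Fixpoint chebU_pair (R : nzRingType) (n : nat) : {poly R} * {poly R} :=
  match n with
  | 0 => (1, 2%:R *: 'X)
  | m.+1 => let: (u, v) := chebU_pair R m in (v, 2%:R *: 'X * v - u)
  end.
Definition chebU (R : nzRingType) (n : nat) : {poly R} := (chebU_pair R n).1.

Lemma chebU0 (R : nzRingType) : chebU R 0 = 1. Proof. by []. Qed.
Lemma chebU1 (R : nzRingType) : chebU R 1 = 2%:R *: 'X. Proof. by []. Qed.
Lemma chebUSS (R : nzRingType) n :
  chebU R n.+2 = 2%:R *: 'X * chebU R n.+1 - chebU R n.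
Proof. by rewrite /chebU /=; case: (chebU_pair R n). Qed.

Lemma chebU_gf (R : comNzRingType) :
  series_is_quotient (fun n => chebU R n) 1 (1 - (2%:R *: 'X)%:P * 'X + 'X^2).
Proof.
move=> n.
have cD k : (1 - (2%:R *: 'X)%:P * 'X + 'X^2 : {poly {poly R}})`_k =
   (if k == 0%N then 1 else if k == 1%N then - (2%:R *: 'X) else if k == 2%N then 1 else 0).
  by rewrite coefD coefB coef1 coefCM coefX coefXn; case: k => [|[|[|k]]] /=;
     rewrite ?mulr0 ?mulr1 ?subr0 ?add0r ?addr0 ?sub0r.
case: n => [|[|n]].
- by rewrite big_ord1 cD /= mulr1 coef1.
- rewrite big_ord_recr big_ord1 /= !cD /= coef1 /=.
  rewrite chebU0 chebU1; ring.
rewrite big_ord_recr big_ord_recr /= big_ord_recr /=.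
rewrite big1 ?add0r; last first.
  move=> i _; rewrite cD; case: i => i /= Hi.
  have -> : (n.+2 - i == 0)%N = false by apply/negbTE; lia.
  have -> : (n.+2 - i == 1)%N = false by apply/negbTE; lia.
  have -> : (n.+2 - i == 2)%N = false by apply/negbTE; lia.
  by rewrite mulr0.
have -> : (n.+2 - n = 2)%N by lia.
have -> : (n.+2 - n.+1 = 1)%N by lia.
rewrite subnn !cD /= coef1 /= chebUSS; ring.
Qed.

(* Main.v *)
Require Import Defs.
From HB Require Import structures.
From mathcomp Require Import all_boot all_order all_algebra.
From mathcomp Require Import mpoly.
From mathcomp Require Import ring zify.
Import GRing.Theory.
Local Open Scope ring_scope.

Set Implicit Arguments. Unset Strict Implicit.
Fixpoint linp (R : comNzRingType) (x u v : R) k : R * R :=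
  match k with 0 => (u, v) | k.+1 => let: (p, q) := linp x u v k in (q, 2 * x * q - p) end.
Definition lin (R : comNzRingType) (x u v : R) k := (linp x u v k).1.
Definition dd (R : comNzRingType) (a b c : R) (k : nat) : R :=
  match k with
  | 0 | 8 => 1
  | 1 | 7 => - (8 * a * b * c)
  | 2 | 6 => (16 * a ^+ 2 * b ^+ 2 + 16 * a ^+ 2 * c ^+ 2 - 8 * a ^+ 2
       + 16 * b ^+ 2 * c ^+ 2 - 8 * b ^+ 2 - 8 * c ^+ 2 + 4)
  | 3 | 5 => (- 32 * a ^+ 3 * b * c + 40 * a * b * c - 32 * a * b ^+ 3 * c
       - 32 * a * b * c ^+ 3)
  | 4 => (16 * a ^+ 4 + 64 * a ^+ 2 * b ^+ 2 * c ^+ 2 - 16 * a ^+ 2 + 16 * b ^+ 4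
       - 16 * b ^+ 2 + 6 + 16 * c ^+ 4 - 16 * c ^+ 2)
  | _ => 0 end.
Definition nn (R : comNzRingType) (a b c : R) (k : nat) : R :=
  match k with
  | 0 | 6 => 1
  | 2 | 4 => - 4 * a ^+ 2 - 4 * b ^+ 2 - 4 * c ^+ 2 + 3
  | 3 => 16 * a * b * c
  | _ => 0 end.

Lemma dd_big (R : comNzRingType) (a b c : R) k : (8 < k)%N -> dd a b c k = 0.
Proof. by do 9 (case: k => [|k] //). Qed.

Lemma rec (R : comNzRingType) (a b c x0 x1 y0 y1 z0 z1 : R) :
  \sum_(j < 9) lin a x0 x1 j * lin b y0 y1 j * lin c z0 z1 j * dd a b c (8 - j) = 0.
Proof.
rewrite !big_ord_recr big_ord0 /= /lin /=.
ring.
Qed.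

Lemma hornU (R : comNzRingType) (x : R) n :
  (chebU R n.+2).[x] = 2 * x * (chebU R n.+1).[x] - (chebU R n).[x].
Proof. by rewrite chebUSS hornerD hornerN hornerM hornerZ hornerX.
Qed.

Lemma linpE (R : comNzRingType) (x : R) n k :
  linp x (chebU R n).[x] (chebU R n.+1).[x] k =
  ((chebU R (k + n)).[x], (chebU R (k + n).+1).[x]).
Proof.
elim: k => [|k IH] //=; rewrite IH.
by rewrite -hornU.
Qed.

Lemma linE (R : comNzRingType) (x : R) n k :
  (chebU R (k + n)).[x] = lin x (chebU R n).[x] (chebU R n.+1).[x] k.
Proof. by rewrite /lin linpE. Qed.

Theorem mainTheorem1 :
  let a : {mpoly int[3]} := 'X_(inord 0) in
  let b : {mpoly int[3]} := 'X_(inord 1) in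
  let c : {mpoly int[3]} := 'X_(inord 2) in
  let t : {poly {mpoly int[3]}} := 'X in
  let N : {poly {mpoly int[3]}} :=
    1
    + (- 4 * a ^+ 2 - 4 * b ^+ 2 - 4 * c ^+ 2 + 3)%:P * t ^+ 2
    + (16 * a * b * c)%:P * t ^+ 3
    + (- 4 * a ^+ 2 - 4 * b ^+ 2 - 4 * c ^+ 2 + 3)%:P * t ^+ 4
    + t ^+ 6 in
  let D : {poly {mpoly int[3]}} :=
    t ^+ 8
    - (8 * a * b * c)%:P * t ^+ 7
    + (16 * a ^+ 2 * b ^+ 2 + 16 * a ^+ 2 * c ^+ 2 - 8 * a ^+ 2
       + 16 * b ^+ 2 * c ^+ 2 - 8 * b ^+ 2 - 8 * c ^+ 2 + 4)%:P * t ^+ 6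
    + (- 32 * a ^+ 3 * b * c + 40 * a * b * c - 32 * a * b ^+ 3 * c
       - 32 * a * b * c ^+ 3)%:P * t ^+ 5
    + (16 * a ^+ 4 + 64 * a ^+ 2 * b ^+ 2 * c ^+ 2 - 16 * a ^+ 2 + 16 * b ^+ 4
       - 16 * b ^+ 2 + 6 + 16 * c ^+ 4 - 16 * c ^+ 2)%:P * t ^+ 4
    + (- 32 * a ^+ 3 * b * c + 40 * a * b * c - 32 * a * b ^+ 3 * c
       - 32 * a * b * c ^+ 3)%:P * t ^+ 3
    + (16 * a ^+ 2 * b ^+ 2 + 16 * a ^+ 2 * c ^+ 2 - 8 * a ^+ 2
       + 16 * b ^+ 2 * c ^+ 2 - 8 * b ^+ 2 - 8 * c ^+ 2 + 4)%:P * t ^+ 2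
    - (8 * a * b * c)%:P * t
    + 1 in
  series_is_quotient
    (fun n => (chebU _ n).[a] * (chebU _ n).[b] * (chebU _ n).[c]) N D.
Proof.
move=> a b c t N D.
have hD k : D`_k = dd a b c k.
  rewrite /D /t !(coefD, coefB, coefN, coefCM, coefXn, coefX, coef1).
  by do 9 (case: k => [|k]; first by rewrite /=; ring); rewrite /=; ring.
have hN k : N`_k = nn a b c k.
  rewrite /N /t !(coefD, coefB, coefN, coefCM, coefXn, coefX, coef1).
  by do 9 (case: k => [|k]; first by rewrite /=; ring); rewrite /=; ring.
pose s := fun n => (chebU {mpoly int[3]} n).[a] * (chebU _ n).[b] * (chebU _ n).[c].
change (series_is_quotient s N D).
have hs m j : s (j + m)%N = lin a (chebU _ m).[a] (chebU _ m.+1).[a] j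
   * lin b (chebU _ m).[b] (chebU _ m.+1).[b] j * lin c (chebU _ m).[c] (chebU _ m.+1).[c] j.
  by rewrite /s !linE.
have hs0 i : s i = lin a 1 (2 * a) i * lin b 1 (2 * b) i * lin c 1 (2 * c) i.
  rewrite -[i]addn0 hs /= !hornerZ !hornerX !hornerC.
  by rewrite !addn0.
move=> n.
do 8 (case: n => [|n]; first by rewrite !big_ord_recr big_ord0 /= !hs0 !hD hN /lin /=; ring).
rewrite hN /=.
rewrite !big_ord_recr /=.
rewrite big1 ?add0r; last first.
  by move=> i _; rewrite hD dd_big ?mulr0 //; have := ltn_ord i; lia.
rewrite !hD.
have E k : (k <= 8)%N -> (8 + n - (k + n) = 8 - k)%N by lia.
rewrite (E 0) // (E 1) // (E 2) // (E 3) // (E 4) // (E 5) // (E 6) // (E 7) // (E 8) //.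
rewrite (hs n 0) (hs n 1) (hs n 2) (hs n 3) (hs n 4) (hs n 5) (hs n 6) (hs n 7) (hs n 8).
rewrite -(rec a b c (chebU _ n).[a] (chebU _ n.+1).[a] (chebU _ n).[b] (chebU _ n.+1).[b] (chebU _ n).[c] (chebU _ n.+1).[c]).
rewrite !big_ord_recr big_ord0 /=.
ring.
Qed.
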